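(* Let $|T|$ denote the number of internal vertices of a free marked triangulation $(T,v)$ of an $(m+2)$-gon, distributed according to $\tilde\mu_m$. As $m\to\infty$, the law of $m^{-2}|T|$ converges to the Lévy (completely asymmetric stable of index $1/2$) distribution with density \[ \frac{1}{\sqrt{3\pi}}\,x^{-3/2}e^{-1/(3x)},\qquad x>0 . \] Equivalently, the limit has the law of $\tfrac{2}{3}g^{-2}$, where $g$ is a standard Gaussian, and \[ \lim_{m\to\infty}\tilde\mu_m(|T|>tm^2)=\frac{1}{\sqrt{3\pi}}\int_t^\infty x^{-3/2}e^{-1/(3x)}\,dx \] for every $t>0$.
   Context: $\phi_{n,m}=\frac{2^{n+1}(2m+1)!(2m+3n)!}{m!^2 n!(2m+2n+2)!}$ is the number of rooted type II triangulations (multiple edges allowed, no loops) of a disc with $m+2$ boundary vertices and $n$ internal vertices. Let $\alpha=27/2$. The free marked triangulation of an $(m+2)$-gon is the probability measure $\tilde\mu_m$ on pairs $(T,v)$, where $T$ is such a rooted triangulation and $v$ is an internal vertex of $T$, given by $\tilde\mu_m(T,v)=\alpha^{-|T|}/\tilde Z_m$. Here $|T|$ is the number of internal vertices and $\tilde Z_m=\sum_n n\phi_{n,m}\alpha^{-n}$. *)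

(* Defs.v *)
From Stdlib Require Import Reals.
From Coquelicot Require Import Coquelicot.
Open Scope R_scope.

Definition phi (n m : nat) : R :=
  2 ^ (n + 1) * INR (Factorial.fact (2 * m + 1)) * INR (Factorial.fact (2 * m + 3 * n))
  / (INR (Factorial.fact m) ^ 2 * INR (Factorial.fact n) * INR (Factorial.fact (2 * m + 2 * n + 2))).

Definition alpha : R := 27 / 2.

(* Total mass (before normalisation) of marked triangulations (T,v) with |T| = n:
   n choices of the internal vertex v, each of weight alpha^{-n}. *)
Definition weight (m n : nat) : R := INR n * phi n m * / alpha ^ n.

Definition Ztilde (m : nat) : R := Series (weight m).

Definition tail_prob (m : nat) (t : R) : R :=
  Series (fun n => if Rlt_dec (t * INR m ^ 2) (INR n) then weight m n else 0)
  / Ztilde m.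

Definition levy_density (x : R) : R :=
  / sqrt (3 * PI) * Rpower x (- (3 / 2)) * exp (- / (3 * x)).

(* Main.v *)
Require Import Defs.
From Stdlib Require Import Reals Lra Lia Psatz ZArith.
From Coquelicot Require Import Coquelicot.
Open Scope R_scope.


Lemma exRInt_cont (f : R -> R) a b :
  (forall z, Rmin a b <= z <= Rmax a b -> continuous f z) -> ex_RInt f a b.
Proof. intros H. exact (@ex_RInt_continuous R_CompleteNormedModule f a b H). Qed.
Lemma ex_der_cont (f : R -> R) x : ex_derive f x -> continuous f x.
Proof. apply (@ex_derive_continuous R_AbsRing R_NormedModule). Qed.

Definition gs (s : R) : R := exp (- (s * s)).
Definition G (y : R) : R := RInt gs 0 y.

Lemma gs_cont x : continuous gs x.
Proof. apply ex_der_cont; unfold gs; auto_derive; auto. Qed.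

Lemma gs_pos x : 0 < gs x.
Proof. apply exp_pos. Qed.

Lemma ex_RInt_gs a b : ex_RInt gs a b.
Proof. apply exRInt_cont; intros; apply gs_cont. Qed.

Lemma G_deriv y : is_derive G y (gs y).
Proof.
  apply (is_derive_RInt gs G 0 y).
  - apply filter_forall; intros b. apply (@RInt_correct R_CompleteNormedModule), ex_RInt_gs.
  - apply gs_cont.
Qed.

Lemma G_cont y : continuous G y.
Proof. apply ex_der_cont. eexists; apply G_deriv. Qed.

Lemma G0 : G 0 = 0.
Proof. unfold G. rewrite RInt_point. reflexivity. Qed.

Lemma G_nonneg y : 0 <= y -> 0 <= G y.
Proof.
  intros Hy. unfold G.
  apply RInt_ge_0; auto. apply ex_RInt_gs. intros; left; apply gs_pos.
Qed.

Definition hf (x t : R) : R := exp (- (x * x) * (1 + t * t)) / (1 + t * t).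
Definition Hh (x : R) : R := RInt (fun t => hf x t) 0 1.

Lemma pos1t t : 0 < 1 + t * t.
Proof. nra. Qed.

Lemma hf_der x t : is_derive (fun z => hf z t) x (- 2 * x * exp (- (x * x) * (1 + t * t))).
Proof.
  unfold hf. auto_derive.
  - generalize (pos1t t); lra.
  - field. generalize (pos1t t); lra.
Qed.

Lemma hf_cont x t : continuous (fun t => hf x t) t.
Proof.
  apply ex_der_cont. unfold hf; auto_derive. generalize (pos1t t); lra.
Qed.

Lemma Hh_deriv x : is_derive Hh x (- 2 * gs x * G x).
Proof.
  assert (H := is_derive_RInt_param hf 0 1 x).
  unfold Hh.
  replace (- 2 * gs x * G x) with (RInt (fun t => Derive (fun u => hf u t) x) 0 1).
  apply H.
  - apply filter_forall; intros y t _. eexists; apply hf_der.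
  - intros t _.
    apply continuity_2d_pt_ext with (fun u v => - 2 * u * exp (- (u * u) * (1 + v * v))).
    { intros u v. symmetry. apply is_derive_unique, hf_der. }
    apply continuity_2d_pt_mult.
    apply continuity_2d_pt_mult. apply continuity_2d_pt_const. apply continuity_2d_pt_id1.
    apply continuity_1d_2d_pt_comp with (f := exp).
    apply derivable_continuous_pt, derivable_pt_exp.
    apply continuity_2d_pt_mult.
    apply continuity_2d_pt_opp, continuity_2d_pt_mult; apply continuity_2d_pt_id1.
    apply continuity_2d_pt_plus. apply continuity_2d_pt_const.
    apply continuity_2d_pt_mult; apply continuity_2d_pt_id2.
  - apply filter_forall; intros y. apply exRInt_cont; intros; apply hf_cont.
  - rewrite (RInt_ext _ (fun t => scal (-2 * gs x) (scal x (gs (x * t + 0))))).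
    2:{ intros t _. assert (E : Derive (fun u : R => hf u t) x = - 2 * x * exp (- (x * x) * (1 + t * t)))
          by (apply is_derive_unique, hf_der). rewrite E.
        unfold scal; simpl; unfold mult; simpl. unfold gs.
        replace (- (x * x) * (1 + t * t)) with (- (x*x) + - ((x * t + 0) * (x * t + 0))) by ring.
        rewrite exp_plus. ring. }
    rewrite (@RInt_scal R_CompleteNormedModule).
    2:{ apply exRInt_cont; intros. apply ex_der_cont. unfold scal; simpl; unfold mult; simpl; unfold gs; auto_derive; auto. }
    rewrite (@RInt_comp_lin R_CompleteNormedModule). 2: apply ex_RInt_gs.
    unfold G. rewrite Rmult_0_r, Rplus_0_r, Rmult_1_r, Rplus_0_r.
    unfold scal; simpl; unfold mult; simpl. reflexivity.
Qed.

Lemma h_const x : G x * G x + Hh x = PI / 4.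
Proof.
  assert (Hd : forall y, is_derive (fun y => G y * G y + Hh y) y 0).
  { intros y. eapply is_derive_ext. intros t; reflexivity.
    replace 0 with (gs y * G y + G y * gs y + (- 2 * gs y * G y)) by ring.
    apply (is_derive_plus (fun y => G y * G y) Hh).
    apply (is_derive_mult G G); try apply G_deriv. intros; apply Rmult_comm.
    apply Hh_deriv. }
  assert (HI := is_RInt_derive (V := R_CompleteNormedModule) (fun y => G y * G y + Hh y) (fun _ => 0) 0 x
     (fun y _ => Hd y) (fun y _ => @continuous_const R_UniformSpace R_UniformSpace 0 y)).
  apply is_RInt_unique in HI. rewrite RInt_const in HI.
  unfold scal in HI; simpl in HI; unfold mult in HI; simpl in HI.
  unfold minus, plus, opp in HI; simpl in HI.
  assert (H0 : G 0 * G 0 + Hh 0 = PI / 4).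
  { rewrite G0. unfold Hh.
    rewrite (RInt_ext _ (fun t => / (1 + t * t))).
    2:{ intros t _. unfold hf. rewrite Rmult_0_r, Ropp_0, Rmult_0_l, exp_0. unfold Rdiv. apply Rmult_1_l. }
    rewrite (is_RInt_unique (V := R_CompleteNormedModule) _ 0 1 (atan 1 - atan 0)).
    rewrite atan_1, atan_0; ring.
    apply (is_RInt_derive (V := R_CompleteNormedModule) atan).
    - intros y _. assert (E := is_derive_atan y). unfold Rsqr in E. exact E.
    - intros y _. apply ex_der_cont. auto_derive. generalize (pos1t y); lra. }
  lra.
Qed.

Lemma exp_le x y : x <= y -> exp x <= exp y.
Proof. intros [H|H]. left; apply exp_increasing; auto. subst; lra. Qed.

Lemma Hh_bounds x : 0 <= Hh x <= exp (- (x * x)).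
Proof.
  assert (Hex : ex_RInt (fun t => hf x t) 0 1).
  { apply exRInt_cont; intros; apply hf_cont. }
  split.
  - unfold Hh. apply RInt_ge_0; try lra; auto.
    intros t _. unfold hf. apply Rlt_le, Rdiv_lt_0_compat. apply exp_pos. apply pos1t.
  - unfold Hh. apply Rle_trans with (RInt (fun _ => exp (- (x * x))) 0 1).
    apply RInt_le; try lra; auto. apply ex_RInt_const.
    intros t Ht. unfold hf.
    assert (A : exp (- (x * x) * (1 + t * t)) <= exp (- (x * x))).
    { apply exp_le. nra. }
    assert (B : 1 <= 1 + t * t) by nra.
    unfold Rdiv. apply Rle_trans with (exp (- (x * x) * (1 + t * t)) * 1).
    apply Rmult_le_compat_l. left; apply exp_pos.
    rewrite <- Rinv_1. apply Rinv_le_contravar; lra. lra.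
    rewrite RInt_const. unfold scal; simpl; unfold mult; simpl. lra.
Qed.

Lemma G_lim : is_lim G p_infty (sqrt PI / 2).
Proof.
  assert (HH : is_lim Hh p_infty 0).
  { apply is_lim_le_le_loc with (fun _ => 0) (fun x => exp (- (x * x))).
    - apply filter_forall; intros y; apply Hh_bounds.
    - apply is_lim_const.
    - apply (is_lim_comp exp (fun x => - (x * x)) p_infty 0 m_infty).
      apply is_lim_exp_m.
      eapply is_lim_ext. intros y; reflexivity.
      apply (is_lim_opp (fun x => x * x) p_infty p_infty).
      apply (is_lim_mult (fun x => x) (fun x => x) p_infty p_infty p_infty).
      apply is_lim_id. apply is_lim_id. simpl; auto.
      simpl; exists 0; intros; discriminate. }
  apply is_lim_ext_loc with (fun x => sqrt (PI / 4 - Hh x)).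
  { exists 0. intros y Hy. rewrite <- (h_const y).
    replace (G y * G y + Hh y - Hh y) with (G y * G y) by ring.
    apply sqrt_square. apply G_nonneg; lra. }
  replace (sqrt PI / 2) with (sqrt (PI / 4 - 0)).
  apply (is_lim_comp_continuous (fun x => PI / 4 - Hh x) sqrt).
  apply (is_lim_minus (fun _ => PI / 4) Hh p_infty (PI/4) 0).
  apply is_lim_const. apply HH. simpl. unfold is_Rbar_minus, is_Rbar_plus; simpl. reflexivity.
  apply ex_der_cont. auto_derive. generalize PI_RGT_0; lra.
  rewrite Rminus_0_r. unfold Rdiv. replace (/ 4) with (Rsqr (/ 2)) by (unfold Rsqr; field).
  rewrite sqrt_mult, sqrt_Rsqr. reflexivity. lra. generalize PI_RGT_0; lra. apply Rle_0_sqr.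
Qed.


Definition f2 (x : R) : R := exp (- / (3 * x)) / (x * sqrt x).
Definition Phi (x : R) : R := G (/ sqrt (3 * x)).

Lemma u_deriv x : 0 < x -> is_derive (fun x => / sqrt (3 * x)) x (- / (2 * x * sqrt 3 * sqrt x)).
Proof.
  intros Hx. assert (Hs : 0 < sqrt x) by (apply sqrt_lt_R0; lra).
  assert (H3 : 0 < sqrt 3) by (apply sqrt_lt_R0; lra).
  auto_derive.
  - rewrite sqrt_mult by lra. repeat split; try lra. apply Rgt_not_eq. apply Rmult_lt_0_compat; lra.
  - rewrite sqrt_mult by lra.
    assert (E3 : sqrt 3 * sqrt 3 = 3) by (apply sqrt_sqrt; lra).
    assert (Ex : sqrt x * sqrt x = x) by (apply sqrt_sqrt; lra).
    set (a := sqrt 3) in *. set (b := sqrt x) in *.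
    rewrite <- Ex. rewrite <- E3 at 1. field. split; lra.
Qed.

Lemma Phi_deriv x : 0 < x -> is_derive Phi x (- f2 x / (2 * sqrt 3)).
Proof.
  intros Hx. assert (Hs : 0 < sqrt x) by (apply sqrt_lt_R0; lra).
  assert (H3 : 0 < sqrt 3) by (apply sqrt_lt_R0; lra).
  unfold Phi.
  eapply is_derive_ext. intros t; reflexivity.
  replace (- f2 x / (2 * sqrt 3)) with ((- / (2 * x * sqrt 3 * sqrt x)) * gs (/ sqrt (3 * x))).
  apply (is_derive_comp G (fun x => / sqrt (3 * x))). apply G_deriv. apply u_deriv; auto.
  unfold gs, f2.
  replace (/ sqrt (3 * x) * / sqrt (3 * x)) with (/ (3 * x)).
  field. split; lra.
  rewrite <- Rinv_mult. rewrite sqrt_sqrt by lra. reflexivity.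
Qed.

Lemma Phi_cont x : 0 < x -> continuous Phi x.
Proof. intros Hx. apply ex_der_cont. eexists; apply Phi_deriv; auto. Qed.

Lemma f2_pos x : 0 < x -> 0 < f2 x.
Proof.
  intros Hx. unfold f2. apply Rdiv_lt_0_compat. apply exp_pos.
  apply Rmult_lt_0_compat; auto. apply sqrt_lt_R0; auto.
Qed.

Lemma Phi_lim_inf : is_lim Phi p_infty 0.
Proof.
  unfold Phi. rewrite <- G0.
  apply (is_lim_comp_continuous (fun x => / sqrt (3 * x)) G).
  2: apply G_cont.
  apply (is_lim_inv (fun x => sqrt (3 * x)) p_infty p_infty).
  apply is_lim_sqrt_p.
  apply is_lim_le_p_loc with (fun x => x).
  exists 0. intros; lra. apply is_lim_id. discriminate.
Qed.


Lemma levy_eq x : 0 < x -> levy_density x = f2 x / (2 * sqrt 3) * (2 / sqrt PI).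
Proof.
  intros Hx. unfold levy_density, f2.
  assert (Hs : 0 < sqrt x) by (apply sqrt_lt_R0; lra).
  assert (H3 : 0 < sqrt 3) by (apply sqrt_lt_R0; lra).
  assert (HP : 0 < sqrt PI) by (apply sqrt_lt_R0; apply PI_RGT_0).
  rewrite Rpower_Ropp. replace (3 / 2) with (1 + / 2) by field.
  rewrite Rpower_plus, Rpower_1, Rpower_sqrt by lra.
  rewrite sqrt_mult by (try lra; apply Rlt_le, PI_RGT_0).
  field. repeat split; lra.
Qed.

Definition FL (x : R) : R := - (2 / sqrt PI) * Phi x.

Lemma FL_deriv x : 0 < x -> is_derive FL x (levy_density x).
Proof.
  intros Hx. rewrite levy_eq by auto. unfold FL.
  assert (H3 : 0 < sqrt 3) by (apply sqrt_lt_R0; lra).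
  assert (HP : 0 < sqrt PI) by (apply sqrt_lt_R0; apply PI_RGT_0).
  replace (f2 x / (2 * sqrt 3) * (2 / sqrt PI)) with ((- (2 / sqrt PI)) * (- f2 x / (2 * sqrt 3))) by (field; lra).
  apply (is_derive_scal Phi x (- (2 / sqrt PI))). apply Phi_deriv; auto.
Qed.

Lemma levy_cont x : 0 < x -> continuous levy_density x.
Proof.
  intros Hx.
  apply continuous_ext_loc with (fun y => f2 y / (2 * sqrt 3) * (2 / sqrt PI)).
  - exists (mkposreal x Hx). intros y Hy. symmetry; apply levy_eq.
    unfold ball in Hy; simpl in Hy; unfold AbsRing_ball, abs, minus, plus, opp in Hy; simpl in Hy.
    apply Rabs_def2 in Hy. lra.
  - apply ex_der_cont. unfold f2. auto_derive.
    assert (Hs : 0 < sqrt x) by (apply sqrt_lt_R0; lra).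
    repeat split; try lra. apply Rgt_not_eq, Rmult_lt_0_compat; lra.
Qed.

Lemma levy_int t : 0 < t ->
  is_RInt_gen levy_density (at_point t) (Rbar_locally p_infty) (2 / sqrt PI * Phi t).
Proof.
  intros Ht.
  apply is_RInt_gen_ext with (Derive FL).
  { apply Filter_prod with (fun x => x = t) (fun y => t < y).
    - reflexivity.
    - exists t; auto.
    - intros a b -> Hb x Hx. simpl in Hx. rewrite Rmin_left in Hx by lra.
      apply is_derive_unique, FL_deriv. lra. }
  replace (2 / sqrt PI * Phi t) with (0 - FL t) by (unfold FL; ring).
  apply is_RInt_gen_Derive.
  - apply Filter_prod with (fun x => x = t) (fun y => t < y).
    + reflexivity.
    + exists t; auto.
    + intros a b -> Hb x Hx. simpl in Hx. rewrite Rmin_left in Hx by lra.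
      eexists; apply FL_deriv; lra.
  - apply Filter_prod with (fun x => x = t) (fun y => t < y).
    + reflexivity.
    + exists t; auto.
    + intros a b -> Hb x Hx. simpl in Hx. rewrite Rmin_left in Hx by lra.
      apply continuous_ext_loc with levy_density.
      * exists (mkposreal x (ltac:(lra) : 0 < x)). intros y Hy. symmetry; apply is_derive_unique, FL_deriv.
        unfold ball in Hy; simpl in Hy; unfold AbsRing_ball, abs, minus, plus, opp in Hy; simpl in Hy.
        apply Rabs_def2 in Hy. lra.
      * apply levy_cont; lra.
  - intros P HP. apply locally_singleton in HP. exact HP.
  - replace 0 with (- (2 / sqrt PI) * 0) by ring.
    unfold FL. apply (is_lim_scal_l Phi (- (2 / sqrt PI)) p_infty 0). apply Phi_lim_inf.
Qed.


Definition rr (m k : nat) : R :=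
  let M := INR m in let K := INR k in
  4 * (2*M+3*K+1) * (2*M+3*K+2) * (2*M+3*K+3) / (27 * K * (2*M+2*K+3) * (2*M+2*K+4)).

Lemma INR_fact_pos n : 0 < INR (Factorial.fact n).
Proof. apply lt_0_INR, Factorial.lt_O_fact. Qed.

Lemma weight_succ m k : (1 <= k)%nat -> weight m (S k) = weight m k * rr m k.
Proof.
  intros Hk. unfold weight, phi, rr, alpha.
  replace (2 * m + 3 * S k)%nat with (S (S (S (2 * m + 3 * k))))%nat by lia.
  replace (2 * m + 2 * S k + 2)%nat with (S (S (2 * m + 2 * k + 2)))%nat by lia.
  replace (S k + 1)%nat with (S (k + 1)) by lia.
  rewrite !fact_simpl.
  rewrite !mult_INR, !S_INR.
  rewrite !plus_INR, !mult_INR. simpl pow. rewrite !S_INR. simpl INR.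
  assert (0 < INR k) by (apply lt_0_INR; lia).
  generalize (INR_fact_pos m) (INR_fact_pos k) (INR_fact_pos (2*m+1)) (INR_fact_pos (2 * m + 3 * k))
    (INR_fact_pos (2 * m + 2 * k + 2)) (pos_INR m); intros.
  assert (0 < (27/2) ^ k) by (apply pow_lt; lra).
  assert (0 < 2 ^ (k + 1)) by (apply pow_lt; lra).
  field. repeat split; try (apply Rgt_not_eq; apply INR_fact_pos); lra.
Qed.


Lemma mono_deriv (g dg : R -> R) a b : a <= b ->
  (forall y, a <= y <= b -> is_derive g y (dg y)) ->
  (forall y, a <= y <= b -> 0 <= dg y) -> g a <= g b.
Proof.
  intros Hab Hd Hp.
  destruct (MVT_gen g a b dg) as [c [Hc E]].
  - intros x Hx. rewrite Rmin_left, Rmax_right in Hx by lra. apply Hd; lra.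
  - intros x Hx. rewrite Rmin_left, Rmax_right in Hx by lra.
    apply continuity_pt_filterlim. apply (@ex_derive_continuous R_AbsRing R_NormedModule).
    eexists; apply Hd; lra.
  - rewrite Rmin_left, Rmax_right in Hc by lra.
    assert (0 <= dg c * (b - a)) by (apply Rmult_le_pos; [apply Hp; lra | lra]). lra.
Qed.

Lemma ln1p_lower x : 0 <= x -> x - x * x / 2 <= ln (1 + x).
Proof.
  intros Hx.
  assert (H := mono_deriv (fun y => ln (1 + y) - y + y * y / 2) (fun y => y * y / (1 + y)) 0 x Hx).
  cbv beta in H. rewrite Rplus_0_r, ln_1 in H.
  assert (H' : 0 - 0 + 0 * 0 / 2 <= ln (1 + x) - x + x * x / 2).
  { apply H.
    - intros y Hy. auto_derive. lra. field. lra.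
    - intros y Hy. apply Rmult_le_pos. nra. left; apply Rinv_0_lt_compat; lra. }
  lra.
Qed.

Lemma ln1p_upper x : 0 <= x -> ln (1 + x) <= x - x * x / 2 + x * x * x / 3.
Proof.
  intros Hx.
  assert (H := mono_deriv (fun y => y - y * y / 2 + y * y * y / 3 - ln (1 + y)) (fun y => y * y * y / (1 + y)) 0 x Hx).
  cbv beta in H. rewrite Rplus_0_r, ln_1 in H.
  assert (H' : 0 - 0 * 0 / 2 + 0 * 0 * 0 / 3 - 0 <= x - x * x / 2 + x * x * x / 3 - ln (1 + x)).
  { apply H.
    - intros y Hy. auto_derive. lra. field. lra.
    - intros y Hy. apply Rmult_le_pos. nra. left; apply Rinv_0_lt_compat; lra. }
  lra.
Qed.

Lemma weight_pos m n : (1 <= n)%nat -> 0 < weight m n.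
Proof.
  intros Hn. unfold weight, phi, alpha.
  assert (0 < INR n) by (apply lt_0_INR; lia).
  generalize (INR_fact_pos m) (INR_fact_pos n) (INR_fact_pos (2*m+1)) (INR_fact_pos (2 * m + 3 * n))
    (INR_fact_pos (2 * m + 2 * n + 2)); intros.
  assert (0 < (27/2) ^ n) by (apply pow_lt; lra).
  assert (0 < 2 ^ (n + 1)) by (apply pow_lt; lra).
  unfold Rdiv. repeat (apply Rmult_lt_0_compat || apply Rinv_0_lt_compat || apply pow_lt); auto; lra.
Qed.

Definition ell (m n : nat) : R :=
  ln (weight m n) + 3 / 2 * ln (INR n) + INR m * INR m / (3 * INR n).

Definition Eb (m k : nat) : R :=
  6 * (INR m + 2) / INR k + 2 * (INR m + 2) ^ 3 / (INR k * INR k).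

(* step bound in terms of u = 1/k *)
Lemma step_poly (M u : R) : 0 <= M -> 0 < u <= 1 ->
  let x1 := (2*M+1)*u/3 in let x2 := (2*M+2)*u/3 in let x3 := (2*M+3)*u/3 in
  let y1 := (2*M+3)*u/2 in let y2 := (2*M+4)*u/2 in
  let p z := z - z * z / 2 in let q z := z * z * z / 3 in
  let c := M * M * u * u / (3 * (1 + u)) in
  - (3 * (M + 2) * u * u + 2 * (M + 2) ^ 3 * (u * u * u))
    <= p x1 + p x2 + p x3 - (p y1 + q y1) - (p y2 + q y2) + 3 / 2 * p u - c
  /\ (p x1 + q x1) + (p x2 + q x2) + (p x3 + q x3) - p y1 - p y2 + 3 / 2 * (p u + q u) - c
    <= 3 * (M + 2) * u * u + 2 * (M + 2) ^ 3 * (u * u * u).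
Proof.
  intros HM Hu. intros.
  assert (Hc1 : M * M * u * u / 3 - M * M * u * u * u / 3 <= c).
  { unfold c. apply Rle_trans with (M * M * u * u / 3 - M * M * u * u * u / 3 / (1 + u)).
    - assert (0 <= M * M * u * u * u) by (apply Rmult_le_pos; [| lra]; repeat apply Rmult_le_pos; nra).
      assert (M * M * u * u * u / 3 / (1 + u) <= M * M * u * u * u / 3).
      { unfold Rdiv. rewrite Rmult_assoc. apply Rmult_le_compat_l. nra.
        rewrite <- (Rmult_1_r (/3)) at 2. apply Rmult_le_compat_l. lra.
        rewrite <- Rinv_1. apply Rinv_le_contravar; lra. }
      lra.
    - right. field. lra. }
  assert (Hc2 : c <= M * M * u * u / 3).
  { unfold c. unfold Rdiv. rewrite Rinv_mult. 
    assert (0 <= M * M * u * u) by (repeat apply Rmult_le_pos; nra).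
    assert (/ (1 + u) <= 1) by (rewrite <- Rinv_1; apply Rinv_le_contravar; lra).
    assert (0 <= / 3) by lra. assert (0 <= / (1+u)) by (left; apply Rinv_0_lt_compat; lra).
    nra. }
  unfold p, q, x1, x2, x3, y1, y2 in *.
  split.
  - assert (0 <= M * u * u) by (apply Rmult_le_pos; nra).
    assert (0 <= M * M * u * u * u) by (repeat apply Rmult_le_pos; nra).
    assert (0 <= M * M * M * u * u * u) by (repeat apply Rmult_le_pos; nra).
    assert (0 <= u * u * u) by (repeat apply Rmult_le_pos; nra).
    nra.
  - assert (0 <= M * u * u) by (apply Rmult_le_pos; nra).
    assert (0 <= M * M * u * u * u) by (repeat apply Rmult_le_pos; nra).
    assert (0 <= M * M * M * u * u * u) by (repeat apply Rmult_le_pos; nra).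
    assert (0 <= M * u * u * u) by (repeat apply Rmult_le_pos; nra).
    assert (0 <= u * u * u) by (repeat apply Rmult_le_pos; nra).
    assert (0 <= u * u) by nra.
    nra.
Qed.


Lemma ell_step m k : (1 <= k)%nat ->
  Rabs (ell m (S k) - ell m k) <=
    3 * (INR m + 2) * (/ INR k) * (/ INR k) + 2 * (INR m + 2) ^ 3 * (/ INR k * / INR k * / INR k).
Proof.
  intros Hk.
  assert (HK : 1 <= INR k) by (apply (le_INR 1); lia).
  assert (HM : 0 <= INR m) by apply pos_INR.
  set (M := INR m) in *. set (K := INR k) in *.
  set (u := / K).
  assert (Hu : 0 < u <= 1).
  { unfold u. split. apply Rinv_0_lt_compat; lra. rewrite <- Rinv_1. apply Rinv_le_contravar; lra. }
  assert (HKu : K = / u) by (unfold u; rewrite Rinv_inv; reflexivity).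
  set (x1 := (2*M+1)*u/3). set (x2 := (2*M+2)*u/3). set (x3 := (2*M+3)*u/3).
  set (y1 := (2*M+3)*u/2). set (y2 := (2*M+4)*u/2).
  assert (Hx1 : 0 <= x1) by (unfold x1; apply Rmult_le_pos; [apply Rmult_le_pos|]; lra).
  assert (Hx2 : 0 <= x2) by (unfold x2; apply Rmult_le_pos; [apply Rmult_le_pos|]; lra).
  assert (Hx3 : 0 <= x3) by (unfold x3; apply Rmult_le_pos; [apply Rmult_le_pos|]; lra).
  assert (Hy1 : 0 <= y1) by (unfold y1; apply Rmult_le_pos; [apply Rmult_le_pos|]; lra).
  assert (Hy2 : 0 <= y2) by (unfold y2; apply Rmult_le_pos; [apply Rmult_le_pos|]; lra).
  assert (Hrr : rr m k = (1 + x1) * (1 + x2) * (1 + x3) / ((1 + y1) * (1 + y2))).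
  { unfold rr. fold M K. unfold x1, x2, x3, y1, y2. rewrite HKu. field.
    repeat split; try lra; nra. }
  assert (Hw : 0 < weight m k) by (apply weight_pos; lia).
  assert (Hdiff : ell m (S k) - ell m k =
     ln (1 + x1) + ln (1 + x2) + ln (1 + x3) - ln (1 + y1) - ln (1 + y2) + 3 / 2 * ln (1 + u)
     - M * M * u * u / (3 * (1 + u))).
  { unfold ell. rewrite weight_succ by lia. rewrite S_INR. fold M K.
    rewrite ln_mult. 2: lra. 2:{ rewrite Hrr; apply Rdiv_lt_0_compat; repeat apply Rmult_lt_0_compat; lra. }
    rewrite Hrr. rewrite ln_div by (repeat apply Rmult_lt_0_compat; lra). rewrite !ln_mult by (repeat apply Rmult_lt_0_compat; lra).
    replace (K + 1) with (K * (1 + u)) by (rewrite HKu; field; lra).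
    rewrite ln_mult by lra. rewrite HKu. field. lra. }
  rewrite Hdiff.
  destruct (step_poly M u HM Hu) as [L U].
  fold x1 x2 x3 y1 y2 in L, U.
  generalize (ln1p_lower x1 Hx1) (ln1p_lower x2 Hx2) (ln1p_lower x3 Hx3)
    (ln1p_lower y1 Hy1) (ln1p_lower y2 Hy2) (ln1p_lower u (ltac:(lra)))
    (ln1p_upper x1 Hx1) (ln1p_upper x2 Hx2) (ln1p_upper x3 Hx3)
    (ln1p_upper y1 Hy1) (ln1p_upper y2 Hy2) (ln1p_upper u (ltac:(lra))). intros.
  apply Rabs_le. split; lra.
Qed.


Lemma Eb_tele m k : (2 <= k)%nat ->
  3 * (INR m + 2) * (/ INR k) * (/ INR k) + 2 * (INR m + 2) ^ 3 * (/ INR k * / INR k * / INR k)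
  <= Eb m k - Eb m (S k).
Proof.
  intros Hk. unfold Eb. rewrite S_INR.
  assert (HK : 2 <= INR k) by (apply (le_INR 2); lia).
  assert (HM : 0 <= INR m) by apply pos_INR.
  set (M := INR m) in *. set (K := INR k) in *.
  assert (A : 0 <= (M + 2) ^ 3) by (apply pow_le; lra).
  set (C := (M + 2) ^ 3) in *.
  assert (E : 6 * (M + 2) / K + 2 * C / (K * K) - (6 * (M + 2) / (K + 1) + 2 * C / ((K + 1) * (K + 1)))
     - (3 * (M + 2) * / K * / K + 2 * C * (/ K * / K * / K))
     = (3 * (M + 2) * (K - 1) * K * (K + 1) + 2 * C * (K * K - K - 1)) / (K * K * K * (K + 1) * (K + 1))).
  { field. lra. }
  assert (0 <= (3 * (M + 2) * (K - 1) * K * (K + 1) + 2 * C * (K * K - K - 1)) / (K * K * K * (K + 1) * (K + 1))).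
  { apply Rdiv_le_0_compat. 
    assert (0 <= 3 * (M + 2) * (K - 1) * K * (K + 1)) by (repeat apply Rmult_le_pos; lra).
    assert (0 <= 2 * C * (K * K - K - 1)) by (apply Rmult_le_pos; nra). lra.
    repeat apply Rmult_lt_0_compat; lra. }
  lra.
Qed.

Lemma Eb_nonneg m k : 0 <= Eb m k.
Proof.
  unfold Eb. assert (0 <= INR m) by apply pos_INR. assert (0 <= INR k) by apply pos_INR.
  assert (0 <= (INR m + 2) ^ 3) by (apply pow_le; lra).
  destruct (Req_dec (INR k) 0) as [E|E].
  - rewrite E. unfold Rdiv. rewrite Rmult_0_r, Rinv_0. lra.
  - apply Rplus_le_le_0_compat; apply Rdiv_le_0_compat; try nra.
    all: assert (0 < INR k) by lra; nra.
Qed.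

Lemma ell_diff m n d : (2 <= n)%nat -> Rabs (ell m (n + d) - ell m n) <= Eb m n - Eb m (n + d).
Proof.
  intros Hn. induction d.
  - rewrite Nat.add_0_r. unfold Rminus. rewrite !Rplus_opp_r, Rabs_R0. lra.
  - replace (n + S d)%nat with (S (n + d)) by lia.
    assert (H1 := ell_step m (n + d) ltac:(lia)).
    assert (H2 := Eb_tele m (n + d) ltac:(lia)).
    replace (ell m (S (n + d)) - ell m n) with ((ell m (S (n + d)) - ell m (n + d)) + (ell m (n + d) - ell m n)) by ring.
    eapply Rle_trans. apply Rabs_triang. lra.
Qed.

Lemma ell_close m n N : (2 <= n)%nat -> (n <= N)%nat -> Rabs (ell m N - ell m n) <= Eb m n.
Proof.
  intros Hn HN. replace N with (n + (N - n))%nat by lia.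
  eapply Rle_trans. apply ell_diff; auto. generalize (Eb_nonneg m (n + (N - n))); lra.
Qed.


Lemma Rabs_le_inv' a b : Rabs a <= b -> - b <= a <= b.
Proof. intros H. split; [generalize (Rabs_maj2 a) | generalize (Rle_abs a)]; lra. Qed.

Lemma sqrt_pos' x : 0 < x -> 0 < sqrt x.
Proof. apply sqrt_lt_R0. Qed.

Lemma weight_ell m n : (1 <= n)%nat ->
  weight m n = exp (ell m n) * (exp (- (INR m * INR m / (3 * INR n))) / (INR n * sqrt (INR n))).
Proof.
  intros Hn. assert (HN : 0 < INR n) by (apply lt_0_INR; lia).
  assert (Hw := weight_pos m n Hn).
  unfold ell. rewrite !exp_plus, exp_ln by auto.
  replace (exp (3 / 2 * ln (INR n))) with (INR n * sqrt (INR n)).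
  rewrite exp_Ropp. assert (Hs := sqrt_pos' _ HN).
  assert (0 < exp (INR m * INR m / (3 * INR n))) by apply exp_pos.
  field. split; lra.
  replace (3 / 2 * ln (INR n)) with (ln (INR n) + / 2 * ln (INR n)) by field.
  rewrite exp_plus, exp_ln by auto. rewrite <- Rpower_sqrt by auto. reflexivity.
Qed.

Lemma V_f2 m n : (1 <= m)%nat -> (1 <= n)%nat ->
  exp (- (INR m * INR m / (3 * INR n))) / (INR n * sqrt (INR n))
  = f2 (INR n / (INR m * INR m)) / (INR m * INR m * INR m).
Proof.
  intros Hm Hn. assert (HN : 0 < INR n) by (apply lt_0_INR; lia).
  assert (HM : 0 < INR m) by (apply lt_0_INR; lia).
  unfold f2. rewrite sqrt_div_alt by nra. rewrite sqrt_square by lra.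
  replace (/ (3 * (INR n / (INR m * INR m)))) with (INR m * INR m / (3 * INR n)) by (field; lra).
  assert (Hs := sqrt_pos' _ HN).
  field. repeat split; lra.
Qed.

Lemma f2_ratio x xi d : 0 < x -> x <= xi <= x + d ->
  f2 x <= f2 xi * (1 + d / x) ^ 2 /\ f2 xi <= f2 x * exp (d / (3 * (x * x))).
Proof.
  intros Hx [H1 H2].
  assert (Hsx := sqrt_pos' x Hx). assert (Hsxi := sqrt_pos' xi ltac:(lra)).
  assert (Hsq : sqrt x <= sqrt xi) by (apply sqrt_le_1_alt; lra).
  unfold f2. split.
  -
    assert (Ee : exp (- / (3 * x)) <= exp (- / (3 * xi))).
    { apply exp_le. apply Ropp_le_contravar. apply Rinv_le_contravar; lra. }
    assert (Hb : xi * sqrt xi <= x * sqrt x * (1 + d / x) ^ 2).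
    { assert (xi <= x * (1 + d / x)) by (field_simplify; lra).
      assert (sqrt xi <= sqrt x * (1 + d / x)).
      { assert (0 <= d / x) by (apply Rdiv_le_0_compat; lra).
        apply Rle_trans with (sqrt (x * (1 + d / x) * (1 + d / x))).
        apply sqrt_le_1_alt. nra.
        rewrite Rmult_assoc, sqrt_mult, sqrt_square; lra || nra. }
      assert (0 <= d / x) by (apply Rdiv_le_0_compat; lra). 
      replace (x * sqrt x * (1 + d / x) ^ 2) with ((x * (1 + d / x)) * (sqrt x * (1 + d / x))) by ring.
      apply Rmult_le_compat; lra. }
    assert (0 < exp (- / (3 * xi))) by apply exp_pos.
    apply Rle_trans with (exp (- / (3 * xi)) / (x * sqrt x)).
    + unfold Rdiv. apply Rmult_le_compat_r. left; apply Rinv_0_lt_compat; nra. auto.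
    + unfold Rdiv. rewrite Rmult_assoc. apply Rmult_le_compat_l. lra.
      apply (Rmult_le_reg_l (x * sqrt x)). nra.
      rewrite Rinv_r by nra.
      apply (Rmult_le_reg_l (xi * sqrt xi)). nra.
      replace (xi * sqrt xi * (x * sqrt x * (/ (xi * sqrt xi) * (1 + d * / x) ^ 2))) with (x * sqrt x * (1 + d / x) ^ 2) by (field; split; lra).
      lra.
  - assert (Ee : exp (- / (3 * xi)) <= exp (- / (3 * x)) * exp (d / (3 * (x * x)))).
    { rewrite <- exp_plus. apply exp_le.
      assert (/ (3 * x) - / (3 * xi) = (xi - x) / (3 * x * xi)) by (field; lra).
      assert ((xi - x) / (3 * x * xi) <= d / (3 * (x * x))).
      { unfold Rdiv. apply Rmult_le_compat. lra. left; apply Rinv_0_lt_compat; nra. lra.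
        apply Rinv_le_contravar; nra. }
      lra. }
    assert (Hb : x * sqrt x <= xi * sqrt xi) by nra.
    apply Rle_trans with (exp (- / (3 * x)) * exp (d / (3 * (x * x))) / (xi * sqrt xi)).
    + unfold Rdiv. apply Rmult_le_compat_r. left; apply Rinv_0_lt_compat; nra. auto.
    + replace (exp (- / (3 * x)) / (x * sqrt x) * exp (d / (3 * (x * x)))) with
        ((exp (- / (3 * x)) * exp (d / (3 * (x * x)))) * / (x * sqrt x)) by (unfold Rdiv; ring).
      unfold Rdiv. apply Rmult_le_compat_l.
      generalize (exp_pos (- / (3 * x))) (exp_pos (d / (3 * (x * x)))); nra.
      apply Rinv_le_contravar; nra.
Qed.


Definition Dl (m n : nat) : R :=
  Phi (INR n / (INR m * INR m)) - Phi ((INR n + 1) / (INR m * INR m)).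

Lemma Dl_mvt m n : (1 <= m)%nat -> (1 <= n)%nat ->
  exists xi, INR n / (INR m * INR m) <= xi <= INR n / (INR m * INR m) + / (INR m * INR m) /\
    Dl m n = / (INR m * INR m) * f2 xi / (2 * sqrt 3).
Proof.
  intros Hm Hn. assert (HN : 0 < INR n) by (apply lt_0_INR; lia).
  assert (HM : 0 < INR m) by (apply lt_0_INR; lia).
  assert (Hh : 0 < / (INR m * INR m)) by (apply Rinv_0_lt_compat; nra).
  set (a := INR n / (INR m * INR m)). set (b := (INR n + 1) / (INR m * INR m)).
  assert (Ha : 0 < a) by (unfold a; apply Rdiv_lt_0_compat; nra).
  assert (Hab : b = a + / (INR m * INR m)) by (unfold a, b; field; lra).
  destruct (MVT_gen Phi a b (fun x => - f2 x / (2 * sqrt 3))) as [c [Hc E]].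
  - intros x Hx. rewrite Rmin_left, Rmax_right in Hx by lra. apply Phi_deriv; lra.
  - intros x Hx. rewrite Rmin_left, Rmax_right in Hx by lra.
    apply continuity_pt_filterlim. apply Phi_cont; lra.
  - rewrite Rmin_left, Rmax_right in Hc by lra.
    exists c. split. lra. unfold Dl. fold a b. 
    assert (H3 : 0 < sqrt 3) by (apply sqrt_lt_R0; lra).
    replace (b - a) with (/ (INR m * INR m)) in E by lra.
    replace (Phi a - Phi b) with (- (Phi b - Phi a)) by ring. rewrite E. field. lra.
Qed.

Lemma term_bounds m n0 n : (1 <= m)%nat -> (2 <= n0)%nat -> (n0 <= n)%nat ->
  exp (ell m n0) * (2 * sqrt 3) / INR m * exp (- Eb m n0 - INR m * INR m / (3 * (INR n0 * INR n0))) * Dl m n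
  <= weight m n <=
  exp (ell m n0) * (2 * sqrt 3) / INR m * (exp (Eb m n0) * (1 + / INR n0) ^ 2) * Dl m n.
Proof.
  intros Hm Hn0 Hn.
  assert (HN : 2 <= INR n) by (apply (le_INR 2); lia).
  assert (HN0 : 2 <= INR n0) by (apply (le_INR 2); lia).
  assert (HNN : INR n0 <= INR n) by (apply le_INR; lia).
  assert (HM : 1 <= INR m) by (apply (le_INR 1); lia).
  assert (H3 : 0 < sqrt 3) by (apply sqrt_lt_R0; lra).
  destruct (Dl_mvt m n ltac:(lia) ltac:(lia)) as [xi [Hxi EDl]].
  set (x := INR n / (INR m * INR m)) in *.
  assert (Hx : 0 < x) by (unfold x; apply Rdiv_lt_0_compat; nra).
  destruct (f2_ratio x xi (/ (INR m * INR m)) Hx Hxi) as [R1 R2].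
  assert (E1 : / (INR m * INR m) / x = / INR n) by (unfold x; field; lra).
  assert (E2 : / (INR m * INR m) / (3 * (x * x)) = INR m * INR m / (3 * (INR n * INR n))) by (unfold x; field; lra).
  rewrite E1 in R1. rewrite E2 in R2.
  assert (Hf2xi : f2 xi = 2 * sqrt 3 * (INR m * INR m) * Dl m n).
  { rewrite EDl. field. lra. }
  rewrite weight_ell by lia. rewrite V_f2 by lia. fold x.
  assert (Hc := ell_close m n0 n Hn0 Hn). apply Rabs_le_inv' in Hc.
  assert (Hfx := f2_pos x Hx).
  assert (Hfxi : 0 < f2 xi) by (apply f2_pos; lra).
  assert (HD : 0 < Dl m n).
  { rewrite Hf2xi in Hfxi. apply (Rmult_lt_reg_l (2 * sqrt 3 * (INR m * INR m))).
    assert (0 < INR m * INR m) by nra. nra. lra. }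
  assert (He1 : exp (ell m n) <= exp (ell m n0) * exp (Eb m n0)) by (rewrite <- exp_plus; apply exp_le; lra).
  assert (He2 : exp (ell m n0) * exp (- Eb m n0) <= exp (ell m n)) by (rewrite <- exp_plus; apply exp_le; lra).
  assert (Hp1 : (1 + / INR n) ^ 2 <= (1 + / INR n0) ^ 2).
  { assert (/ INR n <= / INR n0) by (apply Rinv_le_contravar; lra).
    assert (0 <= / INR n) by (left; apply Rinv_0_lt_compat; lra). simpl; nra. }
  assert (Hp2 : exp (- (INR m * INR m / (3 * (INR n0 * INR n0)))) <= exp (- (INR m * INR m / (3 * (INR n * INR n))))).
  { apply exp_le, Ropp_le_contravar. unfold Rdiv. apply Rmult_le_compat_l. nra.
    apply Rinv_le_contravar; nra. }
  assert (F1 : f2 x <= f2 xi * (1 + / INR n0) ^ 2).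
  { eapply Rle_trans. apply R1. apply Rmult_le_compat_l; lra. }
  assert (F2 : f2 xi * exp (- (INR m * INR m / (3 * (INR n0 * INR n0)))) <= f2 x).
  { apply Rle_trans with (f2 xi * exp (- (INR m * INR m / (3 * (INR n * INR n))))).
    apply Rmult_le_compat_l; lra.
    apply (Rmult_le_reg_r (exp (INR m * INR m / (3 * (INR n * INR n))))). apply exp_pos.
    rewrite Rmult_assoc, <- exp_plus, Rplus_opp_l, exp_0, Rmult_1_r. exact R2. }
  assert (HM3 : 0 < INR m * INR m * INR m) by nra.
  rewrite Hf2xi in F1, F2.
  split.
  - unfold Rminus. rewrite exp_plus.
    apply Rle_trans with (exp (ell m n0) * exp (- Eb m n0) * ((2 * sqrt 3 * (INR m * INR m) * Dl m n *
        exp (- (INR m * INR m / (3 * (INR n0 * INR n0))))) / (INR m * INR m * INR m))).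
    + right. field. lra.
    + apply Rmult_le_compat. 
      * generalize (exp_pos (ell m n0)) (exp_pos (- Eb m n0)); nra.
      * apply Rdiv_le_0_compat; auto. generalize (exp_pos (- (INR m * INR m / (3 * (INR n0 * INR n0))))); nra.
      * exact He2.
      * unfold Rdiv. apply Rmult_le_compat_r. left; apply Rinv_0_lt_compat; auto. exact F2.
  - apply Rle_trans with (exp (ell m n0) * exp (Eb m n0) * ((2 * sqrt 3 * (INR m * INR m) * Dl m n *
        (1 + / INR n0) ^ 2) / (INR m * INR m * INR m))).
    + apply Rmult_le_compat.
      * left; apply exp_pos.
      * apply Rdiv_le_0_compat; auto. lra.
      * exact He1.
      * unfold Rdiv. apply Rmult_le_compat_r. left; apply Rinv_0_lt_compat; auto. exact F1.
    + right. field. lra.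
Qed.


Lemma lim_cont (u : nat -> R) (l : R) (g : R -> R) :
  is_lim_seq u l -> continuous g l -> is_lim_seq (fun n => g (u n)) (g l).
Proof. intros Hu Hg. unfold is_lim_seq. eapply filterlim_comp. apply Hu. apply Hg. Qed.

Lemma Dl_pos m n : (1 <= m)%nat -> (1 <= n)%nat -> 0 < Dl m n.
Proof.
  intros Hm Hn. destruct (Dl_mvt m n Hm Hn) as [xi [Hxi E]]. rewrite E.
  assert (HN : 0 < INR n) by (apply lt_0_INR; lia).
  assert (HM : 0 < INR m) by (apply lt_0_INR; lia).
  assert (0 < INR n / (INR m * INR m)) by (apply Rdiv_lt_0_compat; nra).
  assert (0 < f2 xi) by (apply f2_pos; lra).
  assert (0 < sqrt 3) by (apply sqrt_lt_R0; lra).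
  assert (0 < / (INR m * INR m)) by (apply Rinv_0_lt_compat; nra).
  apply Rdiv_lt_0_compat; nra.
Qed.

Definition indge (N : nat) (a : nat -> R) (n : nat) : R := if Nat.leb N n then a n else 0.
Definition indlt (N : nat) (a : nat -> R) (n : nat) : R := if Nat.ltb n N then a n else 0.

Lemma sum_indge_Dl m N k : (1 <= m)%nat -> (1 <= N)%nat ->
  sum_n (indge N (Dl m)) k =
  if Nat.leb N k then Phi (INR N / (INR m * INR m)) - Phi ((INR k + 1) / (INR m * INR m)) else 0.
Proof.
  intros Hm HN. induction k.
  - rewrite sum_O. unfold indge. destruct (Nat.leb N 0) eqn:E; auto.
    apply Nat.leb_le in E. lia.
  - rewrite sum_Sn, IHk. unfold indge. rewrite S_INR. unfold plus; simpl.
    destruct (Nat.leb N k) eqn:E1; destruct (Nat.leb N (S k)) eqn:E2.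
    + unfold Dl. rewrite !S_INR. match goal with |- ?a = ?b => change (@eq R a b) end; ring.
    + apply Nat.leb_le in E1. apply Nat.leb_gt in E2. lia.
    + apply Nat.leb_gt in E1. apply Nat.leb_le in E2. assert (N = S k) by lia. subst N.
      unfold Dl. rewrite !S_INR. match goal with |- ?a = ?b => change (@eq R a b) end; ring.
    + match goal with |- ?a = ?b => change (@eq R a b) end; ring.
Qed.

Lemma Phi_seq_lim m : (1 <= m)%nat -> is_lim_seq (fun k => Phi ((INR k + 1) / (INR m * INR m))) 0.
Proof.
  intros Hm. assert (HM : 0 < INR m) by (apply lt_0_INR; lia).
  apply (is_lim_comp_seq Phi (fun k => (INR k + 1) / (INR m * INR m)) p_infty 0).
  apply Phi_lim_inf.
  exists O; intros; discriminate.
  apply is_lim_seq_le_p_loc with (fun k => INR k / (INR m * INR m)).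
  exists O. intros k _. unfold Rdiv. apply Rmult_le_compat_r. left; apply Rinv_0_lt_compat; nra. lra.
  apply is_lim_seq_spec. intros B.
  assert (H := proj2 (is_lim_seq_spec INR p_infty) is_lim_seq_INR (B * (INR m * INR m))).
  destruct H as [N HN]. exists N. intros k Hk. specialize (HN k Hk).
  apply (Rmult_lt_reg_r (INR m * INR m)). nra. unfold Rdiv. rewrite Rmult_assoc, Rinv_l by nra. lra.
Qed.

Lemma Dl_tail m N : (1 <= m)%nat -> (1 <= N)%nat ->
  is_series (indge N (Dl m)) (Phi (INR N / (INR m * INR m))).
Proof.
  intros Hm HN. unfold is_series.
  change (is_lim_seq (sum_n (indge N (Dl m))) (Phi (INR N / (INR m * INR m)))).
  apply (is_lim_seq_ext_loc (fun k => Phi (INR N / (INR m * INR m)) - Phi ((INR k + 1) / (INR m * INR m)))).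
  { exists N. intros k Hk. rewrite sum_indge_Dl by auto.
    replace (Nat.leb N k) with true. reflexivity. symmetry; apply Nat.leb_le; lia. }
  assert (H : is_lim_seq (fun k => Phi (INR N / (INR m * INR m)) - Phi ((INR k + 1) / (INR m * INR m)))
      (Phi (INR N / (INR m * INR m)) - 0)).
  { apply (is_lim_seq_minus' (fun _ => _) _ _ 0). apply is_lim_seq_const. apply Phi_seq_lim; auto. }
  rewrite Rminus_0_r in H. exact H.
Qed.

Lemma tail_bounds (a : nat -> R) m N c1 c2 : (1 <= m)%nat -> (1 <= N)%nat -> 0 <= c1 ->
  (forall n, (N <= n)%nat -> c1 * Dl m n <= a n <= c2 * Dl m n) ->
  ex_series (indge N a) /\ (c1 * Phi (INR N / (INR m * INR m)) <= Series (indge N a) <= c2 * Phi (INR N / (INR m * INR m))).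
Proof.
  intros Hm HN Hc1 Hb.
  assert (HD := Dl_tail m N Hm HN).
  assert (Hpos : forall n, (N <= n)%nat -> 0 < Dl m n) by (intros; apply Dl_pos; lia).
  assert (Hb2 : forall n, 0 <= indge N a n <= c2 * indge N (Dl m) n).
  { intros n. unfold indge. destruct (Nat.leb N n) eqn:E. apply Nat.leb_le in E.
    specialize (Hb n E). specialize (Hpos n E). split; try lra. nra. lra. }
  assert (Hb1 : forall n, 0 <= c1 * indge N (Dl m) n <= indge N a n).
  { intros n. unfold indge. destruct (Nat.leb N n) eqn:E. apply Nat.leb_le in E.
    specialize (Hb n E). specialize (Hpos n E). split; try lra. nra. lra. }
  assert (Hex2 : ex_series (fun n => c2 * indge N (Dl m) n)).
  { apply (ex_series_scal_l c2 (indge N (Dl m))). eexists; exact HD. }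
  assert (Hex : ex_series (indge N a)).
  { apply (ex_series_le (indge N a) (fun n => c2 * indge N (Dl m) n)); auto.
    intros n. rewrite Rabs_pos_eq; apply Hb2. }
  split; auto. split.
  - rewrite <- (is_series_unique _ _ HD). rewrite <- Series_scal_l.
    apply Series_le; auto.
  - rewrite <- (is_series_unique _ _ HD). rewrite <- Series_scal_l.
    apply Series_le; auto.
Qed.

Lemma fin_series (b : nat -> R) N : (forall n, (N <= n)%nat -> b n = 0) -> is_series b (sum_n b N).
Proof.
  intros Hb. unfold is_series.
  change (is_lim_seq (sum_n b) (sum_n b N)).
  apply (is_lim_seq_ext_loc (fun _ => sum_n b N)). 2: apply is_lim_seq_const.
  exists N. intros k Hk. induction Hk. reflexivity.
  rewrite sum_Sn, <- IHHk, (Hb (S m)) by lia. symmetry; apply (plus_zero_r (G := R_AbelianGroup)).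
Qed.

Lemma indlt_bound (a : nat -> R) N c : (forall n, (n < N)%nat -> 0 <= a n <= c) ->
  ex_series (indlt N a) /\ (0 <= Series (indlt N a) <= INR N * c).
Proof.
  intros Ha.
  assert (H1 : is_series (indlt N a) (sum_n (indlt N a) N)).
  { apply fin_series. intros n Hn. unfold indlt. replace (Nat.ltb n N) with false. auto.
    symmetry; apply Nat.ltb_ge; lia. }
  assert (H2 : is_series (indlt N (fun _ => c)) (sum_n (indlt N (fun _ => c)) N)).
  { apply fin_series. intros n Hn. unfold indlt. replace (Nat.ltb n N) with false. auto.
    symmetry; apply Nat.ltb_ge; lia. }
  assert (E : forall K, sum_n (indlt N (fun _ => c)) K = INR (Nat.min (S K) N) * c).
  { induction K.
    - rewrite sum_O. unfold indlt. destruct N. simpl; ring. simpl. ring.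
    - rewrite sum_Sn, IHK. unfold indlt.
      destruct (Nat.ltb_spec (S K) N).
      + rewrite !Nat.min_l by lia. rewrite (S_INR (S K)). unfold plus; cbn -[INR].
        match goal with |- ?a = ?b => change (@eq R a b) end; ring.
      + rewrite !Nat.min_r by lia. unfold plus; cbn -[INR]. apply Rplus_0_r. }
  rewrite E, Nat.min_r in H2 by lia.
  assert (Hle : forall n, 0 <= indlt N a n <= indlt N (fun _ => c) n).
  { intros n. unfold indlt. destruct (Nat.ltb_spec n N). apply Ha; auto. lra. }
  split. eexists; exact H1.
  split.
  - apply Rle_trans with (Series (fun _ => 0)). assert (Z0 : is_series (fun _ : nat => 0) (sum_n (fun _ : nat => 0) 0)) by (apply fin_series; auto).
    rewrite sum_O in Z0. rewrite (is_series_unique _ _ Z0). lra.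
    apply Series_le. intros n; split; [lra | apply Hle]. eexists; exact H1.
  - rewrite <- (is_series_unique _ _ H2). apply Series_le; auto. eexists; exact H2.
Qed.


Lemma rr_ge1 m k : 12 <= INR m -> 1 <= INR k -> 6 * INR k <= INR m * INR m -> 1 <= rr m k.
Proof.
  intros HM HK H6. unfold rr. set (M := INR m) in *. set (K := INR k) in *. cbv zeta. clearbody M K.
  assert (HQ : 0 < 27 * K * (2 * M + 2 * K + 3) * (2 * M + 2 * K + 4)) by (repeat apply Rmult_lt_0_compat; lra).
  assert (Hi : 27 * K * (2 * M + 2 * K + 3) * (2 * M + 2 * K + 4) <= 4 * (2*M+3*K+1) * (2*M+3*K+2) * (2*M+3*K+3)).
  2:{ apply (Rmult_le_reg_r (27 * K * (2 * M + 2 * K + 3) * (2 * M + 2 * K + 4))); auto.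
      replace (4 * (2*M+3*K+1) * (2*M+3*K+2) * (2*M+3*K+3) / (27 * K * (2 * M + 2 * K + 3) * (2 * M + 2 * K + 4))
        * (27 * K * (2 * M + 2 * K + 3) * (2 * M + 2 * K + 4))) with (4 * (2*M+3*K+1) * (2*M+3*K+2) * (2*M+3*K+3)) by (field; lra).
      lra. }
  assert (A1 : 162 * K * K <= 27 * K * (M * M)) by nra.
  assert (A0 : 0 <= 9 * (M * M) - 90 * M - 192) by nra.
  assert (A2 : 90 * M * K + 192 * K <= 9 * (M * M) * K) by nra.
  assert (0 <= M * M * M) by (repeat apply Rmult_le_pos; lra).
  nra.
Qed.

Lemma weight0 m : weight m 0 = 0.
Proof. unfold weight. simpl. ring. Qed.

Lemma weight_le_n0 m n0 n : 12 <= INR m -> 6 * (INR n0 - 1) <= INR m * INR m -> (1 <= n0)%nat -> (n <= n0)%nat ->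
  weight m n <= weight m n0.
Proof.
  intros HM H6 Hn0 Hn.
  assert (Hd : forall d, (n0 - d >= 1)%nat -> weight m (n0 - d) <= weight m n0).
  { induction d; intros Hd.
    - rewrite Nat.sub_0_r. lra.
    - eapply Rle_trans. 2: apply IHd; lia.
      replace (n0 - d)%nat with (S (n0 - S d)) by lia.
      rewrite weight_succ by lia.
      assert (0 < weight m (n0 - S d)) by (apply weight_pos; lia).
      assert (1 <= rr m (n0 - S d)).
      { apply rr_ge1; auto. apply (le_INR 1); lia.
        assert (INR (n0 - S d) <= INR n0 - 1).
        { rewrite minus_INR by lia. rewrite S_INR. assert (0 <= INR d) by apply pos_INR. lra. }
        lra. }
      nra. }
  destruct n.
  - rewrite weight0. left; apply weight_pos; auto.
  - replace (S n) with (n0 - (n0 - S n))%nat by lia. apply Hd. lia.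
Qed.

Definition cnt (x : R) : nat := Z.to_nat (up x).

Lemma cnt_spec x : 0 <= x -> x < INR (cnt x) <= x + 1.
Proof.
  intros Hx. destruct (archimed x) as [A B].
  assert (Hz : (0 <= up x)%Z). { apply le_IZR. simpl. lra. }
  unfold cnt. rewrite INR_IZR_INZ, Z2Nat.id by auto. lra.
Qed.

Lemma cnt_least x n : 0 <= x -> x < INR n -> (cnt x <= n)%nat.
Proof.
  intros Hx Hn. destruct (archimed x) as [A B].
  assert (Hz : (0 <= up x)%Z). { apply le_IZR. simpl. lra. }
  destruct (Nat.le_gt_cases (cnt x) n) as [H|H]; auto.
  exfalso. assert (Z.of_nat n < up x)%Z.
  { unfold cnt in H. apply Nat2Z.inj_lt in H. rewrite Z2Nat.id in H by auto. lia. }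
  assert (Z.of_nat n + 1 <= up x)%Z by lia.
  apply IZR_le in H1. rewrite plus_IZR in H1. rewrite <- INR_IZR_INZ in H1. simpl in H1. lra.
Qed.

Lemma xf2_bound x : 0 < x -> x * f2 x <= 3 * sqrt x.
Proof.
  intros Hx. unfold f2. assert (Hs := sqrt_pos' x Hx).
  assert (E : exp (- / (3 * x)) <= 3 * x).
  { rewrite exp_Ropp. assert (H := exp_ineq1_le (/ (3 * x))).
    assert (0 < / (3 * x)) by (apply Rinv_0_lt_compat; lra).
    replace (3 * x) with (/ / (3 * x)) at 2 by (rewrite Rinv_inv; auto).
    apply Rinv_le_contravar; auto. lra. }
  replace (x * (exp (- / (3 * x)) / (x * sqrt x))) with (exp (- / (3 * x)) / sqrt x) by (field; lra).
  apply (Rmult_le_reg_r (sqrt x)); auto. unfold Rdiv. rewrite Rmult_assoc, Rinv_l by lra.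
  rewrite Rmult_assoc, sqrt_sqrt by lra. lra.
Qed.

Lemma G_pos y : 0 < y -> 0 < G y.
Proof.
  intros Hy. destruct (MVT_gen G 0 y gs) as [c [Hc E]].
  - intros; apply G_deriv.
  - intros; apply continuity_pt_filterlim, G_cont.
  - rewrite G0 in E. assert (0 < gs c) by apply gs_pos. nra.
Qed.

Lemma Phi_pos x : 0 < x -> 0 < Phi x.
Proof.
  intros Hx. unfold Phi. apply G_pos. apply Rinv_0_lt_compat, sqrt_lt_R0. lra.
Qed.


Lemma weight_0_1 n : weight 0 n <= weight 1 n.
Proof.
  assert (N0 : 0 <= INR n) by apply pos_INR.
  assert (F1 : INR (Factorial.fact (2 * 1 + 3 * n)) = (3 * INR n + 2) * (3 * INR n + 1) * INR (Factorial.fact (2 * 0 + 3 * n))).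
  { replace (2 * 1 + 3 * n)%nat with (S (S (2 * 0 + 3 * n))) by lia.
    rewrite !fact_simpl, !mult_INR, !S_INR, plus_INR, !mult_INR. simpl (INR 2). simpl (INR 0). simpl (INR 3). ring. }
  assert (F2 : INR (Factorial.fact (2 * 1 + 2 * n + 2)) = (2 * INR n + 4) * (2 * INR n + 3) * INR (Factorial.fact (2 * 0 + 2 * n + 2))).
  { replace (2 * 1 + 2 * n + 2)%nat with (S (S (2 * 0 + 2 * n + 2))) by lia.
    rewrite !fact_simpl, !mult_INR, !S_INR, !plus_INR, !mult_INR. simpl (INR 2). simpl (INR 0). ring. }
  assert (F3 : INR (Factorial.fact (2 * 1 + 1)) = 6) by (simpl; ring).
  assert (F4 : INR (Factorial.fact (2 * 0 + 1)) = 1) by (simpl; ring).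
  assert (F5 : INR (Factorial.fact 1) = 1) by (simpl; ring).
  assert (F6 : INR (Factorial.fact 0) = 1) by (simpl; ring).
  unfold weight, phi. rewrite F1, F2, F3, F4, F5, F6.
  generalize (INR_fact_pos n) (INR_fact_pos (2 * 0 + 3 * n)) (INR_fact_pos (2 * 0 + 2 * n + 2)); intros.
  assert (0 < / alpha ^ n) by (apply Rinv_0_lt_compat, pow_lt; unfold alpha; lra).
  assert (0 < 2 ^ (n + 1)) by (apply pow_lt; lra).
  set (a := INR (Factorial.fact (2 * 0 + 3 * n))) in *. set (b := INR (Factorial.fact (2 * 0 + 2 * n + 2))) in *.
  set (c := INR (Factorial.fact n)) in *. set (N := INR n) in *.
  set (p := / alpha ^ n) in *. set (q := 2 ^ (n + 1)) in *. clearbody a b c N p q.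
  set (X := N * (q * 1 * a / (1 ^ 2 * c * b)) * p).
  assert (HX : 0 <= X) by (unfold X; apply Rmult_le_pos; [apply Rmult_le_pos; [lra|] | lra];
     apply Rdiv_le_0_compat; [nra | simpl; nra]).
  assert (E : N * (q * 6 * ((3 * N + 2) * (3 * N + 1) * a) / (1 ^ 2 * c * ((2 * N + 4) * (2 * N + 3) * b))) * p
     = X * (6 * ((3 * N + 2) * (3 * N + 1)) / ((2 * N + 4) * (2 * N + 3)))).
  { unfold X. field. repeat split; lra. }
  rewrite E.
  assert (1 <= 6 * ((3 * N + 2) * (3 * N + 1)) / ((2 * N + 4) * (2 * N + 3))).
  { apply (Rmult_le_reg_r ((2 * N + 4) * (2 * N + 3))). nra.
    unfold Rdiv. rewrite Rmult_assoc, Rinv_l by nra. nra. }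
  rewrite <- (Rmult_1_r X) at 1. apply Rmult_le_compat_l; lra.
Qed.


Lemma split_ind (a : nat -> R) N n : a n = indlt N a n + indge N a n.
Proof.
  unfold indlt, indge. destruct (Nat.ltb_spec n N); destruct (Nat.leb_spec N n); try lia; ring.
Qed.

Lemma split_series (a : nat -> R) N : ex_series (indlt N a) -> ex_series (indge N a) ->
  ex_series a /\ Series a = Series (indlt N a) + Series (indge N a).
Proof.
  intros H1 H2. split.
  - apply (ex_series_ext (fun n => plus (indlt N a n) (indge N a n))).
    intros n; symmetry; apply split_ind. apply (ex_series_plus (V := R_NormedModule)); auto.
  - rewrite <- Series_plus by auto. apply Series_ext. apply split_ind.
Qed.

Lemma weight_nonneg m n : 0 <= weight m n.
Proof. destruct n. rewrite weight0; lra. left; apply weight_pos; lia. Qed.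

Definition Kc (m n0 : nat) : R := exp (ell m n0) * (2 * sqrt 3) / INR m.

Lemma Kc_pos m n0 : (1 <= m)%nat -> 0 < Kc m n0.
Proof.
  intros Hm. unfold Kc. assert (0 < INR m) by (apply lt_0_INR; lia).
  assert (0 < sqrt 3) by (apply sqrt_lt_R0; lra). generalize (exp_pos (ell m n0)); intros.
  apply Rdiv_lt_0_compat; auto. nra.
Qed.

Lemma tail_weight m n0 N : (1 <= m)%nat -> (2 <= n0)%nat -> (n0 <= N)%nat ->
  ex_series (indge N (weight m)) /\
  (Kc m n0 * exp (- Eb m n0 - INR m * INR m / (3 * (INR n0 * INR n0))) * Phi (INR N / (INR m * INR m))
   <= Series (indge N (weight m)) <=
   Kc m n0 * (exp (Eb m n0) * (1 + / INR n0) ^ 2) * Phi (INR N / (INR m * INR m))).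
Proof.
  intros Hm Hn0 HN. apply tail_bounds; try lia.
  - generalize (Kc_pos m n0 Hm) (exp_pos (- Eb m n0 - INR m * INR m / (3 * (INR n0 * INR n0)))). nra.
  - intros n Hn. unfold Kc. apply term_bounds; lia.
Qed.

Lemma part1 m : ex_series (weight m).
Proof.
  assert (Hpos : forall m, (1 <= m)%nat -> ex_series (weight m)).
  { intros k Hk. apply (split_series (weight k) 2).
    - apply (indlt_bound (weight k) 2 (weight k 0 + weight k 1)).
      intros n Hn. split. apply weight_nonneg. 
      generalize (weight_nonneg k 0) (weight_nonneg k 1). destruct n as [|[|]]; try lia; lra.
    - apply (tail_weight k 2 2); lia. }
  destruct m. 2: apply Hpos; lia.
  apply (ex_series_le (weight 0) (weight 1)). 2: apply Hpos; lia.
  intros n. unfold norm; simpl. unfold abs; simpl. rewrite Rabs_pos_eq by apply weight_nonneg.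
  apply weight_0_1.
Qed.


Definition gg (d u : R) : R := 6 * (u + 2 * u * u) / d + 2 * u * (1 + 2 * u) ^ 3 / (d * d).
Definition LO (d u : R) : R := exp (- gg d u - u * u / (3 * d * d)).
Definition HI (d u : R) : R := exp (gg d u) * (1 + u * u / d) ^ 2.

Lemma div_le_helper a b c d : 0 <= a -> a <= b -> 0 < c -> c <= d -> a / d <= b / c.
Proof.
  intros. unfold Rdiv. apply Rmult_le_compat; auto.
  left; apply Rinv_0_lt_compat; lra. apply Rinv_le_contravar; auto.
Qed.

Lemma Eb_le m n0 d : 0 < d -> (1 <= m)%nat -> d * (INR m * INR m) <= INR n0 ->
  Eb m n0 <= gg d (/ INR m).
Proof.
  intros Hd Hm H. assert (HM : 1 <= INR m) by (apply (le_INR 1); lia).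
  unfold Eb. set (M := INR m) in *. set (N0 := INR n0) in *. clearbody M N0.
  assert (HdM : 0 < d * (M * M)) by (apply Rmult_lt_0_compat; nra).
  assert (E : gg d (/ M) = 6 * (M + 2) / (d * (M * M)) + 2 * (M + 2) ^ 3 / (d * (M * M) * (d * (M * M)))).
  { unfold gg. field. lra. }
  rewrite E.
  assert (0 <= (M + 2) ^ 3) by (apply pow_le; lra).
  apply Rplus_le_compat.
  - apply div_le_helper; lra.
  - apply div_le_helper; try lra. nra. apply Rmult_le_compat; lra.
Qed.

Lemma factors_le m n0 d : 0 < d -> (1 <= m)%nat -> d * (INR m * INR m) <= INR n0 ->
  LO d (/ INR m) <= exp (- Eb m n0 - INR m * INR m / (3 * (INR n0 * INR n0))) /\
  exp (Eb m n0) * (1 + / INR n0) ^ 2 <= HI d (/ INR m).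
Proof.
  intros Hd Hm H. assert (HM : 1 <= INR m) by (apply (le_INR 1); lia).
  assert (HE := Eb_le m n0 d Hd Hm H).
  set (M := INR m) in *. set (N0 := INR n0) in *. clearbody M N0.
  assert (HdM : 0 < d * (M * M)) by (apply Rmult_lt_0_compat; nra).
  split.
  - unfold LO. apply exp_le.
    assert (M * M / (3 * (N0 * N0)) <= / M * / M / (3 * d * d)).
    { replace (/ M * / M / (3 * d * d)) with (M * M / (3 * ((d * (M * M)) * (d * (M * M))))) by (field; lra).
      apply div_le_helper; try nra. }
    lra.
  - unfold HI. apply Rmult_le_compat.
    + left; apply exp_pos.
    + apply pow_le. assert (0 < / N0) by (apply Rinv_0_lt_compat; lra). lra.
    + apply exp_le; auto.
    + assert (/ N0 <= / M * / M / d).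
      { replace (/ M * / M / d) with (/ (d * (M * M))) by (field; lra).
        apply Rinv_le_contravar; lra. }
      assert (0 <= / N0) by (left; apply Rinv_0_lt_compat; lra).
      simpl. nra.
Qed.


Lemma sandwich t d m : 0 < t -> 0 < d <= 1/6 -> d <= t -> 12 <= INR m -> 1 <= d * (INR m * INR m) ->
  LO d (/ INR m) * Phi (INR (cnt (t * (INR m * INR m))) / (INR m * INR m)) /
     (sqrt (2 * d) + HI d (/ INR m) * Phi (INR (cnt (d * (INR m * INR m))) / (INR m * INR m)))
  <= tail_prob m t <=
  HI d (/ INR m) * Phi (INR (cnt (t * (INR m * INR m))) / (INR m * INR m)) /
     (LO d (/ INR m) * Phi (INR (cnt (d * (INR m * INR m))) / (INR m * INR m))).
Proof.
  intros Ht Hd Hdt HM12 HdM.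
  assert (Hm : (1 <= m)%nat). { destruct m. simpl in HM12. lra. lia. }
  assert (HM : 1 <= INR m) by lra.
  set (n0 := cnt (d * (INR m * INR m))). set (n1 := cnt (t * (INR m * INR m))).
  assert (Hn0 := cnt_spec (d * (INR m * INR m)) ltac:(nra)). fold n0 in Hn0.
  assert (Hn1 := cnt_spec (t * (INR m * INR m)) ltac:(nra)). fold n1 in Hn1.
  assert (Hn02 : (2 <= n0)%nat).
  { destruct n0 as [|[|]]. simpl in Hn0; lra. simpl in Hn0; lra. lia. }
  assert (Hn01 : (n0 <= n1)%nat).
  { apply cnt_least. nra. assert (d * (INR m * INR m) <= t * (INR m * INR m)) by nra. lra. }
  assert (HF := factors_le m n0 d ltac:(lra) Hm ltac:(lra)). destruct HF as [Flo Fhi].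
  set (lo := LO d (/ INR m)) in *. set (hi := HI d (/ INR m)) in *.
  set (x0 := INR n0 / (INR m * INR m)). set (x1 := INR n1 / (INR m * INR m)).
  assert (Hx0 : 0 < x0) by (unfold x0; apply Rdiv_lt_0_compat; nra).
  assert (Hx1 : 0 < x1) by (unfold x1; apply Rdiv_lt_0_compat; nra).
  assert (HP0 := Phi_pos x0 Hx0). assert (HP1 := Phi_pos x1 Hx1).
  assert (HK := Kc_pos m n0 Hm).
  assert (Hlo : 0 < lo) by (unfold lo, LO; apply exp_pos).
  assert (ET : Series (fun n => if Rlt_dec (t * INR m ^ 2) (INR n) then weight m n else 0)
              = Series (indge n1 (weight m))).
  { apply Series_ext. intros n. unfold indge.
    replace (INR m ^ 2) with (INR m * INR m) by ring.
    destruct (Rlt_dec (t * (INR m * INR m)) (INR n)) as [H|H].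
    - replace (Nat.leb n1 n) with true. reflexivity. symmetry. apply Nat.leb_le. apply cnt_least; auto. nra.
    - destruct (Nat.leb_spec n1 n). exfalso. apply H. apply le_INR in H0. lra. reflexivity. }
  destruct (tail_weight m n0 n1 Hm Hn02 Hn01) as [ExT [T1 T2]]. fold x1 in T1, T2.
  destruct (tail_weight m n0 n0 Hm Hn02 (le_n _)) as [ExB [B1 B2]]. fold x0 in B1, B2.
  assert (HA : ex_series (indlt n0 (weight m)) /\ 0 <= Series (indlt n0 (weight m)) <= INR n0 * weight m n0).
  { apply indlt_bound. intros n Hn. split. apply weight_nonneg. apply weight_le_n0; try lia; auto.
    assert (d * (INR m * INR m) <= 1 / 6 * (INR m * INR m)) by nra. lra. }
  destruct HA as [ExA [A1 A2]].
  assert (Hw0 : INR n0 * weight m n0 <= Kc m n0 * sqrt (2 * d)).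
  { rewrite weight_ell by lia. rewrite V_f2 by lia. fold x0.
    replace (INR n0 * (exp (ell m n0) * (f2 x0 / (INR m * INR m * INR m))))
      with (exp (ell m n0) / INR m * (x0 * f2 x0)) by (unfold x0; field; lra).
    assert (X1 := xf2_bound x0 Hx0).
    assert (X2 : x0 <= 2 * d).
    { unfold x0. apply (Rmult_le_reg_r (INR m * INR m)). nra.
      unfold Rdiv. rewrite Rmult_assoc, Rinv_l by nra. nra. }
    assert (X3 : sqrt x0 <= sqrt (2 * d)) by (apply sqrt_le_1_alt; lra).
    assert (H3 : sqrt 3 * sqrt 3 = 3) by (apply sqrt_sqrt; lra).
    assert (H3p : 0 < sqrt 3) by (apply sqrt_lt_R0; lra).
    assert (H3g : 1 < sqrt 3). { rewrite <- sqrt_1. apply sqrt_lt_1_alt; lra. }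
    assert (E0 : 0 < exp (ell m n0) / INR m) by (apply Rdiv_lt_0_compat; [apply exp_pos | lra]).
    unfold Kc. replace (exp (ell m n0) * (2 * sqrt 3) / INR m * sqrt (2 * d))
      with (exp (ell m n0) / INR m * (2 * sqrt 3 * sqrt (2 * d))) by (field; lra).
    apply Rmult_le_compat_l. lra.
    assert (0 <= sqrt x0) by apply sqrt_pos.
    assert (H15 : 3 / 2 <= sqrt 3) by (apply Rnot_lt_le; intro; nra).
    assert (3 * sqrt x0 <= 2 * sqrt 3 * sqrt x0) by nra.
    assert (2 * sqrt 3 * sqrt x0 <= 2 * sqrt 3 * sqrt (2 * d)) by (apply Rmult_le_compat_l; lra).
    lra. }
  destruct (split_series (weight m) n0 ExA ExB) as [_ EZ].
  unfold tail_prob, Ztilde. rewrite ET, EZ.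
  set (T := Series (indge n1 (weight m))) in *. set (A := Series (indlt n0 (weight m))) in *.
  set (B := Series (indge n0 (weight m))) in *.
  assert (Tlo : Kc m n0 * lo * Phi x1 <= T).
  { eapply Rle_trans. 2: apply T1. apply Rmult_le_compat_r. lra. apply Rmult_le_compat_l; lra. }
  assert (Thi : T <= Kc m n0 * hi * Phi x1).
  { eapply Rle_trans. apply T2. apply Rmult_le_compat_r. lra. apply Rmult_le_compat_l; lra. }
  assert (Blo : Kc m n0 * lo * Phi x0 <= B).
  { eapply Rle_trans. 2: apply B1. apply Rmult_le_compat_r. lra. apply Rmult_le_compat_l; lra. }
  assert (Bhi : B <= Kc m n0 * hi * Phi x0).
  { eapply Rle_trans. apply B2. apply Rmult_le_compat_r. lra. apply Rmult_le_compat_l; lra. }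
  assert (HKlo : 0 < Kc m n0 * lo * Phi x0) by (apply Rmult_lt_0_compat; [apply Rmult_lt_0_compat|]; lra).
  assert (HKlo1 : 0 < Kc m n0 * lo * Phi x1) by (apply Rmult_lt_0_compat; [apply Rmult_lt_0_compat|]; lra).
  split.
  - replace (lo * Phi x1 / (sqrt (2 * d) + hi * Phi x0))
      with (Kc m n0 * lo * Phi x1 / (Kc m n0 * sqrt (2 * d) + Kc m n0 * hi * Phi x0)).
    2:{ assert (0 <= sqrt (2 * d)) by apply sqrt_pos.
        assert (0 < hi * Phi x0). 
        { apply Rmult_lt_0_compat; auto. unfold hi, HI. apply Rmult_lt_0_compat. apply exp_pos.
          apply pow_lt. assert (0 <= / INR m * / INR m / d).
          { apply Rdiv_le_0_compat; try lra. assert (0 < / INR m) by (apply Rinv_0_lt_compat; lra). nra. } lra. }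
        field. split. lra.
        replace (Kc m n0 * sqrt (2 * d) + Kc m n0 * hi * Phi x0) with (Kc m n0 * (sqrt (2 * d) + hi * Phi x0)) by ring.
        apply Rgt_not_eq. apply Rmult_lt_0_compat; lra. }
    apply div_le_helper; lra.
  - replace (hi * Phi x1 / (lo * Phi x0)) with (Kc m n0 * hi * Phi x1 / (Kc m n0 * lo * Phi x0)) by (field; lra).
    apply div_le_helper; try lra.
Qed.


Lemma u_lim : is_lim_seq (fun m => / INR m) 0.
Proof.
  assert (H := is_lim_seq_inv INR p_infty is_lim_seq_INR ltac:(discriminate)). simpl in H. exact H.
Qed.

Lemma LO_lim d : 0 < d -> is_lim_seq (fun m => LO d (/ INR m)) 1.
Proof.
  intros Hd. replace 1 with (LO d 0).
  apply lim_cont. apply u_lim. apply ex_der_cont. unfold LO, gg. auto_derive. repeat split; lra.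
  unfold LO, gg. replace (- (6 * (0 + 2 * 0 * 0) / d + 2 * 0 * (1 + 2 * 0) ^ 3 / (d * d)) - 0 * 0 / (3 * d * d)) with 0 by (field; lra).
  apply exp_0.
Qed.

Lemma HI_lim d : 0 < d -> is_lim_seq (fun m => HI d (/ INR m)) 1.
Proof.
  intros Hd. replace 1 with (HI d 0).
  apply lim_cont. apply u_lim. apply ex_der_cont. unfold HI, gg. auto_derive. repeat split; lra.
  unfold HI, gg. replace (6 * (0 + 2 * 0 * 0) / d + 2 * 0 * (1 + 2 * 0) ^ 3 / (d * d)) with 0 by (field; lra).
  rewrite exp_0. replace (0 * 0 / d) with 0 by (field; lra). ring.
Qed.

Lemma x_lim t : 0 < t -> is_lim_seq (fun m => INR (cnt (t * (INR m * INR m))) / (INR m * INR m)) t.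
Proof.
  intros Ht.
  apply is_lim_seq_le_le_loc with (fun _ => t) (fun m => t + / INR m * / INR m).
  - exists 1%nat. intros m Hm. assert (HM : 1 <= INR m) by (apply (le_INR 1); lia).
    destruct (cnt_spec (t * (INR m * INR m)) ltac:(nra)) as [C1 C2].
    split.
    + apply (Rmult_le_reg_r (INR m * INR m)). nra. unfold Rdiv. rewrite Rmult_assoc, Rinv_l by nra. lra.
    + apply (Rmult_le_reg_r (INR m * INR m)). nra. unfold Rdiv. rewrite Rmult_assoc, Rinv_l by nra.
      replace ((t + / INR m * / INR m) * (INR m * INR m)) with (t * (INR m * INR m) + 1) by (field; lra). lra.
  - apply is_lim_seq_const.
  - assert (H : is_lim_seq (fun m => t + / INR m * / INR m) (t + 0 * 0)).
    { apply (is_lim_seq_plus' (fun _ => t)). apply is_lim_seq_const.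
      apply is_lim_seq_mult'; apply u_lim. }
    replace (t + 0 * 0) with t in H by ring. exact H.
Qed.

Lemma Phix_lim t : 0 < t -> is_lim_seq (fun m => Phi (INR (cnt (t * (INR m * INR m))) / (INR m * INR m))) (Phi t).
Proof. intros Ht. apply lim_cont. apply x_lim; auto. apply Phi_cont; auto. Qed.

Lemma lower_lim t d : 0 < t -> 0 < d ->
  is_lim_seq (fun m => LO d (/ INR m) * Phi (INR (cnt (t * (INR m * INR m))) / (INR m * INR m)) /
     (sqrt (2 * d) + HI d (/ INR m) * Phi (INR (cnt (d * (INR m * INR m))) / (INR m * INR m))))
   (Phi t / (sqrt (2 * d) + Phi d)).
Proof.
  intros Ht Hd.
  replace (Phi t / (sqrt (2 * d) + Phi d)) with (1 * Phi t / (sqrt (2 * d) + 1 * Phi d)) by (rewrite !Rmult_1_l; reflexivity).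
  apply is_lim_seq_div'.
  - apply is_lim_seq_mult'. apply LO_lim; auto. apply Phix_lim; auto.
  - apply (is_lim_seq_plus' (fun _ => _)). apply is_lim_seq_const.
    apply is_lim_seq_mult'. apply HI_lim; auto. apply Phix_lim; auto.
  - assert (0 <= sqrt (2 * d)) by apply sqrt_pos. assert (0 < Phi d) by (apply Phi_pos; auto). lra.
Qed.

Lemma upper_lim t d : 0 < t -> 0 < d ->
  is_lim_seq (fun m => HI d (/ INR m) * Phi (INR (cnt (t * (INR m * INR m))) / (INR m * INR m)) /
     (LO d (/ INR m) * Phi (INR (cnt (d * (INR m * INR m))) / (INR m * INR m))))
   (Phi t / Phi d).
Proof.
  intros Ht Hd.
  replace (Phi t / Phi d) with (1 * Phi t / (1 * Phi d)) by (rewrite !Rmult_1_l; reflexivity).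
  apply is_lim_seq_div'.
  - apply is_lim_seq_mult'. apply HI_lim; auto. apply Phix_lim; auto.
  - apply is_lim_seq_mult'. apply LO_lim; auto. apply Phix_lim; auto.
  - assert (0 < Phi d) by (apply Phi_pos; auto). lra.
Qed.


Definition dj (j : nat) : R := / (3 * ((INR j + 2) * (INR j + 2))).

Lemma dj_pos j : 0 < dj j.
Proof. unfold dj. assert (0 <= INR j) by apply pos_INR. apply Rinv_0_lt_compat. nra. Qed.

Lemma dj_small j : dj j <= 1 / 6.
Proof.
  unfold dj. assert (0 <= INR j) by apply pos_INR.
  replace (1/6) with (/ 6) by field. apply Rinv_le_contravar. lra. nra.
Qed.

Lemma Phi_dj j : Phi (dj j) = G (INR j + 2).
Proof.
  unfold Phi, dj. assert (0 <= INR j) by apply pos_INR. f_equal.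
  replace (3 * / (3 * ((INR j + 2) * (INR j + 2)))) with (/ ((INR j + 2) * (INR j + 2))) by (field; lra).
  rewrite sqrt_inv, sqrt_square by lra. rewrite Rinv_inv. reflexivity.
Qed.

Lemma y_lim : is_lim_seq (fun j => INR j + 2) p_infty.
Proof.
  apply is_lim_seq_le_p_loc with INR. exists O; intros; lra. apply is_lim_seq_INR.
Qed.

Lemma Phi_dj_lim : is_lim_seq (fun j => Phi (dj j)) (sqrt PI / 2).
Proof.
  apply (is_lim_seq_ext (fun j => G (INR j + 2))). intros; symmetry; apply Phi_dj.
  apply (is_lim_comp_seq G (fun j => INR j + 2) p_infty (sqrt PI / 2)).
  apply G_lim. exists O; intros; discriminate. apply y_lim.
Qed.

Lemma invy_lim : is_lim_seq (fun j => / (INR j + 2)) 0.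
Proof.
  assert (H := is_lim_seq_inv _ _ y_lim ltac:(discriminate)). simpl in H. exact H.
Qed.

Lemma dj_lim : is_lim_seq dj 0.
Proof.
  apply (is_lim_seq_ext (fun j => / 3 * (/ (INR j + 2) * / (INR j + 2)))).
  { intros j. unfold dj. assert (0 <= INR j) by apply pos_INR. field. lra. }
  replace 0 with (/ 3 * (0 * 0)) by ring.
  apply (is_lim_seq_mult' (fun _ => _)). apply is_lim_seq_const. apply is_lim_seq_mult'; apply invy_lim.
Qed.

Lemma sqrt_dj_lim : is_lim_seq (fun j => sqrt (2 * dj j)) 0.
Proof.
  rewrite <- sqrt_0. apply (lim_cont (fun j => 2 * dj j) 0 sqrt).
  replace 0 with (2 * 0) by ring. apply (is_lim_seq_mult' (fun _ => _)). apply is_lim_seq_const. apply dj_lim.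
  apply continuity_pt_filterlim. apply continuity_pt_sqrt. lra.
Qed.

Lemma Ld_lim t : is_lim_seq (fun j => Phi t / (sqrt (2 * dj j) + Phi (dj j))) (Phi t / (0 + sqrt PI / 2)).
Proof.
  apply is_lim_seq_div'. apply is_lim_seq_const.
  apply is_lim_seq_plus'. apply sqrt_dj_lim. apply Phi_dj_lim.
  assert (0 < sqrt PI) by (apply sqrt_lt_R0, PI_RGT_0). lra.
Qed.

Lemma Ud_lim t : is_lim_seq (fun j => Phi t / Phi (dj j)) (Phi t / (sqrt PI / 2)).
Proof.
  apply is_lim_seq_div'. apply is_lim_seq_const. apply Phi_dj_lim.
  assert (0 < sqrt PI) by (apply sqrt_lt_R0, PI_RGT_0). lra.
Qed.

Lemma part2 t : 0 < t -> is_lim_seq (fun m => tail_prob m t) (2 / sqrt PI * Phi t).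
Proof.
  intros Ht.
  assert (HPI : 0 < sqrt PI) by (apply sqrt_lt_R0, PI_RGT_0).
  set (Lt := 2 / sqrt PI * Phi t).
  assert (EL1 : Phi t / (0 + sqrt PI / 2) = Lt) by (unfold Lt; field; lra).
  assert (EL2 : Phi t / (sqrt PI / 2) = Lt) by (unfold Lt; field; lra).
  apply is_lim_seq_spec. intros eps.
  assert (He2 : 0 < eps / 2) by (generalize (cond_pos eps); lra).
  set (e2 := mkposreal _ He2).
  assert (HL := proj2 (is_lim_seq_spec _ _) (Ld_lim t) e2). rewrite EL1 in HL.
  assert (HU := proj2 (is_lim_seq_spec _ _) (Ud_lim t) e2). rewrite EL2 in HU.
  assert (HD := proj2 (is_lim_seq_spec _ _) dj_lim (mkposreal t Ht)).
  destruct (filter_and _ _ HL (filter_and _ _ HU HD)) as [j Hj].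
  destruct (Hj j (le_n _)) as [HLj [HUj HDj]]. simpl in HLj, HUj, HDj.
  set (d := dj j) in *.
  assert (Hd0 : 0 < d) by apply dj_pos. assert (Hd6 : d <= 1/6) by apply dj_small.
  assert (Hdt : d <= t). { rewrite Rminus_0_r, Rabs_pos_eq in HDj; lra. }
  assert (Hlo := proj2 (is_lim_seq_spec _ _) (lower_lim t d Ht Hd0) e2).
  assert (Hhi := proj2 (is_lim_seq_spec _ _) (upper_lim t d Ht Hd0) e2).
  assert (HM := proj2 (is_lim_seq_spec _ _) is_lim_seq_INR (Rmax 12 (/ d))).
  destruct (filter_and _ _ Hlo (filter_and _ _ Hhi HM)) as [N HN].
  exists N. intros m Hm. destruct (HN m Hm) as [Hl [Hh HMm]]. simpl in Hl, Hh.
  assert (H12 : 12 <= INR m) by (generalize (Rmax_l 12 (/ d)); lra).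
  assert (Hid : / d <= INR m) by (generalize (Rmax_r 12 (/ d)); lra).
  assert (HdM : 1 <= d * (INR m * INR m)).
  { assert (1 <= d * INR m).
    { apply (Rmult_le_reg_l (/ d)). apply Rinv_0_lt_compat; lra.
      rewrite <- Rmult_assoc, Rinv_l, Rmult_1_l, Rmult_1_r by lra. lra. }
    nra. }
  destruct (sandwich t d m Ht (conj Hd0 Hd6) Hdt H12 HdM) as [S1 S2].
  apply Rabs_lt_between'. split.
  - apply Rabs_lt_between' in Hl. apply Rabs_lt_between' in HLj. simpl in *. lra.
  - apply Rabs_lt_between' in Hh. apply Rabs_lt_between' in HUj. simpl in *. lra.
Qed.

Theorem proposition6p3 :
  (forall m : nat, ex_series (weight m)) /\
  (forall t : R, 0 < t ->
     exists L : R,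
       is_RInt_gen levy_density (at_point t) (Rbar_locally p_infty) L /\
       is_lim_seq (fun m : nat => tail_prob m t) L).
Proof.
  split.
  - apply part1.
  - intros t Ht. exists (2 / sqrt PI * Phi t). split.
    + apply levy_int; auto.
    + apply part2; auto.
Qed.
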